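(* Suppose $S$ is a complex-valued function of $z,p,b,T$ satisfying \[ \frac{S}{1+S}-zS=c+t, \] where $z=vi$ with $v\in\mathbb{R}^+$, $c=p/bT\in[0,1]$, and $t\in\mathbb{C}$ is also a function of $z,p,b,T$. Assume $S$ is continuous in $z$ and always has non-negative real part, and that $|t|\le\tau(p,b,T)/v$ where $\tau$ does not depend on $v$. If for some $v_0\ge2c$ \[ \frac{v_0+(1-c)}{\sqrt2}>\frac{\tau}{v_0}+2\sqrt{cv_0}+2\sqrt\tau, \] then for all $v\ge v_0$, \[ |\operatorname{Im}S|,\ |\operatorname{Re}S|\ \le\ |S|\ \le\ \sqrt{\frac2v\,|c+t|}. \]
   Context: Here $p,b,T$ are positive integers (fixed while $v$ varies). *)

(* Defs.v *)
From Stdlib Require Import Reals.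
From Coquelicot Require Export Coquelicot.
Open Scope R_scope.

Definition cpar (p b T : nat) : R := INR p / (INR b * INR T).

(* Main.v *)
Require Import Defs.
From Stdlib Require Import Reals Lra Psatz Lia.
From Coquelicot Require Import Coquelicot.
Open Scope R_scope.

Definition Wf (v : R) (s : C) : C := Cminus (0, v) (Cinv (Cplus (RtoC 1) s)).

Lemma one_plus_nz (s : C) : 0 <= fst s -> Cplus (RtoC 1) s <> RtoC 0.
Proof. intros H E. apply (f_equal fst) in E. simpl in E. lra. Qed.

Lemma key_alg (c v : R) (s tt : C) : 0 <= fst s ->
  Cminus (Cdiv s (Cplus (RtoC 1) s)) (Cmult (0, v) s) = Cplus (RtoC c) tt ->
  Cmod (Cplus (RtoC c) tt) = Cmod s * Cmod (Wf v s) /\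
  Cplus (Cplus (Cminus (RtoC c) (RtoC 1)) (0, v)) tt = Cminus (Wf v s) (Cmult (0, v) s).
Proof.
  intros Hx E. pose proof (one_plus_nz s Hx) as Hn.
  assert (Et : tt = Cminus (Cminus (Cdiv s (Cplus (RtoC 1) s)) (Cmult (0, v) s)) (RtoC c)).
  { rewrite E. field. }
  split.
  - rewrite <- E, <- Cmod_mult. 
    replace (Cminus (Cdiv s (Cplus (RtoC 1) s)) (Cmult (0, v) s)) with (Copp (Cmult s (Wf v s))).
    + apply Cmod_opp.
    + unfold Wf. field. exact Hn.
  - rewrite Et. unfold Wf. field. exact Hn.
Qed.

Lemma W_lower (v : R) (s : C) : 0 <= fst s -> v - 1/2 <= Cmod (Wf v s).
Proof.
  intros Hx. eapply Rle_trans; [| apply Rmax_Cmod].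
  eapply Rle_trans; [| apply Rmax_r].
  eapply Rle_trans; [| apply Rle_abs].
  unfold Wf, Cminus, Cinv, Cplus, Copp, RtoC. cbn [fst snd].
  destruct s as [x y]. cbn [fst snd] in *.
  rewrite !Rplus_0_l. set (D := (1 + x) ^ 2 + y ^ 2).
  assert (HD : 1 <= D) by (unfold D; simpl; pose proof (Rle_0_sqr y); pose proof (Rle_0_sqr x); unfold Rsqr in *; lra).
  assert (y / D >= - (1/2)).
  { apply Rle_ge. apply (Rmult_le_reg_r D). lra.
    replace (y / D * D) with y by (field; lra). unfold D; simpl. pose proof (Rle_0_sqr (y+1)). pose proof (Rle_0_sqr x). unfold Rsqr in *. lra. }
  replace (- (- y / D)) with (y/D) by (field; lra). lra.
Qed.

Definition hf (x y v : R) : R :=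
  let D := (1 + x) * (1 + x) + y * y in
  ((1 + x) / D) * ((1 + x) / D) + (v + y / D) * (v + y / D) - v * v * (x * x + y * y).

Lemma hf_eq (v : R) (s : C) : 0 <= fst s ->
  Cmod (Wf v s) ^ 2 - v ^ 2 * Cmod s ^ 2 = hf (fst s) (snd s) v.
Proof.
  intros Hx. rewrite !Cmod2_alt. destruct s as [x y]. simpl in *.
  unfold hf, Wf, Cminus, Cinv, Cplus, Copp, RtoC. simpl.
  assert (0 < (1 + x) * (1 + x) + y * y) by nra.
  field. lra.
Qed.

Lemma sqrt_add_le (a b : R) : 0 <= a -> 0 <= b -> sqrt (a + b) <= sqrt a + sqrt b.
Proof.
  intros Ha Hb.
  pose proof (sqrt_pos a). pose proof (sqrt_pos b).
  rewrite <- (sqrt_pow2 (sqrt a + sqrt b)) by lra.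
  apply sqrt_le_1_alt.
  replace ((sqrt a + sqrt b) ^ 2) with (sqrt a * sqrt a + sqrt b * sqrt b + 2 * (sqrt a * sqrt b)) by ring.
  rewrite !sqrt_sqrt by lra.
  assert (0 <= sqrt a * sqrt b) by (apply Rmult_le_pos; lra). lra.
Qed.

Lemma Bbig (c tau v v0 : R) (tt : C) :
  0 < c <= 1 -> 0 <= tau -> 0 < v0 -> 2 * c <= v0 -> v0 <= v ->
  Cmod tt <= tau / v ->
  (v0 + (1 - c)) / sqrt 2 > tau / v0 + 2 * sqrt (c * v0) + 2 * sqrt tau ->
  4 * v * Cmod (Cplus (RtoC c) tt) <
  Cmod (Cplus (Cplus (Cminus (RtoC c) (RtoC 1)) (0, v)) tt) ^ 2.
Proof.
  intros Hc Htau Hv0 Hcv0 Hvv Ht H.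
  assert (Hv : 0 < v) by lra.
  set (e := Cmod (Cplus (RtoC c) tt)).
  assert (He : e <= c + tau / v).
  { unfold e. eapply Rle_trans; [apply Cmod_triangle|]. rewrite Cmod_R, Rabs_right by lra. lra. }
  assert (He0 : 0 <= e) by apply Cmod_ge_0.
  set (B0 := Cplus (Cminus (RtoC c) (RtoC 1)) (0, v)).
  set (B := Cplus B0 tt).
  assert (HB0 : Cmod B0 = sqrt ((1 - c) ^ 2 + v ^ 2)).
  { unfold B0, Cmod, Cminus, Cplus, Copp, RtoC. cbn [fst snd]. f_equal. ring. }
  assert (HB : Cmod B0 <= Cmod B + Cmod tt).
  { replace B0 with (Cplus B (Copp tt)) by (unfold B; ring).
    rewrite <- (Cmod_opp tt). apply Cmod_triangle. }
  set (s2 := sqrt 2).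
  assert (Hs2 : 0 < s2) by (apply sqrt_lt_R0; lra).
  assert (Hs2s : s2 * s2 = 2) by (apply sqrt_sqrt; lra).
  assert (L1 : (v + (1 - c)) / s2 <= Cmod B0).
  { rewrite HB0. apply (Rmult_le_reg_r s2); [lra|].
    replace ((v + (1 - c)) / s2 * s2) with (v + (1 - c)) by (field; lra).
    unfold s2. rewrite <- sqrt_mult by (try apply Rplus_le_le_0_compat; try apply pow2_ge_0; lra).
    rewrite <- (sqrt_pow2 (v + (1 - c))) at 1 by lra.
    apply sqrt_le_1_alt.
    pose proof (Rle_0_sqr (v - (1 - c))). unfold Rsqr in *. simpl. lra. }
  set (a := sqrt (c * v)). set (b := sqrt (c * v0)).
  assert (Ha2 : a * a = c * v) by (apply sqrt_sqrt; nra).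
  assert (Hb2 : b * b = c * v0) by (apply sqrt_sqrt; nra).
  assert (Hb0 : 0 <= b) by apply sqrt_pos.
  assert (Hab : b <= a) by (apply sqrt_le_1_alt; nra).
  assert (Hbc : s2 * c <= b).
  { unfold b. rewrite <- (sqrt_pow2 (s2 * c)) by nra. apply sqrt_le_1_alt.
    replace ((s2 * c) ^ 2) with ((s2 * s2) * (c * c)) by ring. rewrite Hs2s. nra. }
  assert (L2 : 2 * (a - b) <= (v - v0) / s2).
  { apply (Rmult_le_reg_r (s2 * c)); [nra|].
    replace ((v - v0) / s2 * (s2 * c)) with (c * v - c * v0) by (field; lra).
    rewrite <- Ha2, <- Hb2.
    assert (0 <= (a - b) * (a + b - 2 * (s2 * c))) by (apply Rmult_le_pos; lra).
    nra. }
  assert (L3 : tau / v <= tau / v0).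
  { unfold Rdiv. apply Rmult_le_compat_l; [lra|]. apply Rinv_le_contravar; lra. }
  assert (L4 : sqrt (v * e) <= a + sqrt tau).
  { eapply Rle_trans; [| apply sqrt_add_le; nra].
    apply sqrt_le_1_alt.
    assert (v * e <= v * (c + tau / v)) by (apply Rmult_le_compat_l; lra).
    replace (v * (c + tau / v)) with (c * v + tau) in * by (field; lra). lra. }
  assert (Hm : 2 * sqrt (v * e) < Cmod B).
  { assert ((v0 + (1 - c)) / s2 + (v - v0) / s2 = (v + (1 - c)) / s2) by (field; lra).
    fold s2 in H. fold b in H. lra. }
  pose proof (sqrt_pos (v * e)).
  assert (Hq : sqrt (v * e) * sqrt (v * e) = v * e) by (apply sqrt_sqrt; nra).
  assert (0 < (Cmod B - 2 * sqrt (v * e)) * (Cmod B + 2 * sqrt (v * e))) by (apply Rmult_lt_0_compat; lra).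
  simpl. nra.
Qed.

Lemma cont_fst (S : R -> C) v : continuous S v -> continuity_pt (fun w => fst (S w)) v.
Proof. intros H. apply continuity_pt_filterlim. apply (continuous_comp S fst v H). destruct (S v); apply continuous_fst. Qed.
Lemma cont_snd (S : R -> C) v : continuous S v -> continuity_pt (fun w => snd (S w)) v.
Proof. intros H. apply continuity_pt_filterlim. apply (continuous_comp S snd v H). destruct (S v); apply continuous_snd. Qed.

Lemma cont_h (S : R -> C) v : continuous S v -> 0 <= fst (S v) ->
  continuity_pt (fun w => hf (fst (S w)) (snd (S w)) w) v.
Proof.
  intros H Hx. pose proof (cont_fst S v H) as HX. pose proof (cont_snd S v H) as HY.
  assert (HD : (1 + fst (S v)) * (1 + fst (S v)) + snd (S v) * snd (S v) <> 0).
  { pose proof (Rle_0_sqr (snd (S v))). unfold Rsqr in *. nra. }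
  unfold hf.
  repeat first [apply continuity_pt_minus | apply continuity_pt_plus | apply continuity_pt_mult
    | apply continuity_pt_div | apply continuity_pt_inv | apply continuity_pt_id | exact HX | exact HY | exact HD
    | apply continuity_pt_const; intros ? ?; reflexivity].
Qed.

Lemma Cmod_iv (v : R) : 0 <= v -> Cmod (0, v) = v.
Proof. intros. unfold Cmod. cbn [fst snd]. replace (0 ^ 2 + v ^ 2) with (v ^ 2) by ring. apply sqrt_pow2; lra. Qed.

Lemma gap (c tau v v0 : R) (s tt : C) :
  0 < c <= 1 -> 0 <= tau -> 0 < v0 -> 2 * c <= v0 -> v0 <= v ->
  0 <= fst s ->
  Cminus (Cdiv s (Cplus (RtoC 1) s)) (Cmult (0, v) s) = Cplus (RtoC c) tt ->
  Cmod tt <= tau / v ->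
  (v0 + (1 - c)) / sqrt 2 > tau / v0 + 2 * sqrt (c * v0) + 2 * sqrt tau ->
  hf (fst s) (snd s) v <> 0.
Proof.
  intros Hc Htau Hv0 Hcv0 Hvv Hx E Ht H.
  pose proof (Bbig c tau v v0 tt Hc Htau Hv0 Hcv0 Hvv Ht H) as HB.
  destruct (key_alg c v s tt Hx E) as [He EB].
  rewrite EB, He in HB.
  rewrite <- hf_eq by exact Hx. intro Z.
  set (w := Cmod (Wf v s)) in *. set (m := Cmod s) in *.
  assert (Hw : 0 <= w) by apply Cmod_ge_0. assert (Hm : 0 <= m) by apply Cmod_ge_0.
  assert (Hwm : w = v * m).
  { assert ((w - v * m) * (w + v * m) = 0) by (simpl in Z; nra).
    apply Rmult_integral in H0. destruct H0; nra. }
  assert (HB2 : Cmod (Cminus (Wf v s) (Cmult (0, v) s)) <= 2 * v * m).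
  { unfold Cminus. eapply Rle_trans; [apply Cmod_triangle|].
    rewrite Cmod_opp, Cmod_mult, Cmod_iv by lra. fold w m. lra. }
  pose proof (Cmod_ge_0 (Cminus (Wf v s) (Cmult (0, v) s))).
  rewrite Hwm in HB. simpl in HB. nra.
Qed.

Lemma large (c tau v : R) (s tt : C) :
  0 < c <= 1 -> 0 <= tau -> 3 + tau <= v ->
  0 <= fst s ->
  Cminus (Cdiv s (Cplus (RtoC 1) s)) (Cmult (0, v) s) = Cplus (RtoC c) tt ->
  Cmod tt <= tau / v ->
  0 <= hf (fst s) (snd s) v.
Proof.
  intros Hc Htau Hv Hx E Ht.
  destruct (key_alg c v s tt Hx E) as [He EB].
  assert (Hee : Cmod (Cplus (RtoC c) tt) <= c + tau / v).
  { eapply Rle_trans; [apply Cmod_triangle|]. rewrite Cmod_R, Rabs_right by lra. lra. }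
  rewrite He in Hee.
  pose proof (W_lower v s Hx) as HW.
  rewrite <- hf_eq by exact Hx.
  set (w := Cmod (Wf v s)) in *. set (m := Cmod s) in *.
  assert (Hm : 0 <= m) by apply Cmod_ge_0.
  apply Rnot_lt_le. intro Z.
  assert (Hwm : w < v * m).
  { apply Rnot_le_lt. intro K. assert (v * m * (v * m) <= w * w) by (apply Rmult_le_compat; nra).
    simpl in Z. nra. }
  assert (Hv' : v * (m * w) <= v * (c + tau / v)) by (apply Rmult_le_compat_l; lra).
  replace (v * (c + tau / v)) with (c * v + tau) in Hv' by (field; lra).
  assert (w * w < v * m * w) by (apply Rmult_lt_compat_r; lra).
  assert ((v - 1/2) * (v - 1/2) <= w * w) by (apply Rmult_le_compat; lra).
  assert (c * v <= v) by nra.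
  nra.
Qed.

Theorem mainTheorem13 (p b T : nat) (hp : (0 < p)%nat) (hb : (0 < b)%nat) (hT : (0 < T)%nat)
  (S t : R -> C) (tau : R) :
  0 <= cpar p b T <= 1 ->
  (forall v : R, 0 < v ->
     Cminus (Cdiv (S v) (Cplus (RtoC 1) (S v))) (Cmult (0, v) (S v))
     = Cplus (RtoC (cpar p b T)) (t v)) ->
  (forall v : R, 0 < v -> continuous S v) ->
  (forall v : R, 0 < v -> 0 <= Re (S v)) ->
  (forall v : R, 0 < v -> Cmod (t v) <= tau / v) ->
  forall v0 : R, 0 < v0 -> 2 * cpar p b T <= v0 ->
  (v0 + (1 - cpar p b T)) / sqrt 2 >
    tau / v0 + 2 * sqrt (cpar p b T * v0) + 2 * sqrt tau ->
  forall v : R, v0 <= v ->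
    Rabs (Im (S v)) <= Cmod (S v) /\ Rabs (Re (S v)) <= Cmod (S v) /\
    Cmod (S v) <= sqrt (2 / v * Cmod (Cplus (RtoC (cpar p b T)) (t v))).
Proof.
  intros Hc1 Heq Hcont HRe Ht v0 Hv0 Hcv0 H v Hvv.
  set (c := cpar p b T) in *.
  assert (Hc0 : 0 < c).
  { unfold c, cpar. apply Rdiv_lt_0_compat. apply lt_0_INR; lia.
    apply Rmult_lt_0_compat; apply lt_0_INR; lia. }
  assert (Hc : 0 < c <= 1) by lra.
  assert (Htau : 0 <= tau).
  { pose proof (Ht 1 Rlt_0_1). pose proof (Cmod_ge_0 (t 1)). unfold Rdiv in H0.
    rewrite Rinv_1, Rmult_1_r in H0. lra. }
  assert (Hv : 0 < v) by lra.
  pose proof (Rmax_Cmod (S v)) as HM.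
  split; [eapply Rle_trans; [apply Rmax_r | exact HM]|].
  split; [eapply Rle_trans; [apply Rmax_l | exact HM]|].
  set (h := fun w => hf (fst (S w)) (snd (S w)) w).
  assert (Hgap : forall w, v0 <= w -> h w <> 0).
  { intros w Hw. unfold h. apply (gap c tau w v0 (S w) (t w)); try lra.
    apply HRe; lra. apply Heq; lra. apply Ht; lra. }
  assert (Hh : 0 <= h v).
  { apply Rnot_lt_le. intro Hneg.
    set (V := Rmax v (3 + tau) + 1).
    assert (HV1 : v < V) by (unfold V; pose proof (Rmax_l v (3 + tau)); lra).
    assert (HV2 : 3 + tau <= V) by (unfold V; pose proof (Rmax_r v (3 + tau)); lra).
    assert (HhV : 0 <= h V).
    { unfold h. apply (large c tau V (S V) (t V)); try lra.
      apply HRe; lra. apply Heq; lra. apply Ht; lra. }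
    assert (HhV' : 0 < h V).
    { destruct HhV as [|E]; auto. exfalso. apply (Hgap V); [lra | auto]. }
    destruct (Ranalysis5.IVT_interv h v V) as [z [Hz Hz0]]; auto.
    - intros a Ha. unfold h. apply cont_h. apply Hcont; lra. apply HRe; lra.
    - apply (Hgap z); [lra | exact Hz0]. }
  unfold h in Hh.
  assert (Hx : 0 <= fst (S v)) by (apply HRe; lra).
  rewrite <- hf_eq in Hh by exact Hx.
  destruct (key_alg c v (S v) (t v) Hx (Heq v Hv)) as [He _].
  rewrite He.
  set (w := Cmod (Wf v (S v))) in *. set (m := Cmod (S v)) in *.
  assert (Hm : 0 <= m) by apply Cmod_ge_0. assert (Hw : 0 <= w) by apply Cmod_ge_0.
  assert (Hwm : v * m <= w).
  { apply Rnot_lt_le. intro K. assert (w * w < v * m * (v * m)) by (apply Rmult_le_0_lt_compat; lra).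
    simpl in Hh. nra. }
  assert (Hmm : v * (m * m) <= m * w) by nra.
  rewrite <- (sqrt_pow2 m) at 1 by exact Hm.
  apply sqrt_le_1_alt.
  apply (Rmult_le_reg_l v); [lra|].
  replace (v * (2 / v * (m * w))) with (2 * (m * w)) by (field; lra).
  simpl. rewrite Rmult_1_r. assert (0 <= m * w) by (apply Rmult_le_pos; lra). lra.
Qed.
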